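(* Let $T$ be a prae-dilator and let $(X,\iota_X,L_X)$ be a Bachmann-Howard system for $T$. Then the relation $<_{\vartheta_T(X)}$ is a (strict) linear order on $\vartheta_T(X)$.
   Context: The finite subset functor $[\cdot]^{<\omega}$ sends a set $X$ to the set of its finite subsets and a function $f$ to $[f]^{<\omega}(a)=\{f(x)\mid x\in a\}$; subsets of linear orders are regarded as suborders. A prae-dilator consists of an endofunctor $X\mapsto T_X$ on the category of linear orders (morphisms: order embeddings) and a natural transformation $\operatorname{supp}^T:T\Rightarrow[\cdot]^{<\omega}$ such that for every linear order $X$ and every $\sigma\in T_X$ we have $\sigma\in\operatorname{rng}(T_{\iota_\sigma})$, where $\iota_\sigma:\operatorname{supp}^T_X(\sigma)\hookrightarrow X$ is the inclusion. For a linear order $Z$ and finite $a,b\subseteq Z$ write $a<^{\operatorname{fin}}_Z b$ iff for every $s\in a$ there is $t\in b$ with $s<_Z t$; $\leq^{\operatorname{fin}}_Z$ is defined analogously with $\leq_Z$; singletons $\{s\}$ are written $s$. For a linear order $X$ let $\vartheta_T(X)$ be the set of formal terms $\vartheta\sigma$ with $\sigma\in T_X$. A Bachmann-Howard system (for $T$) is a triple $(X,\iota_X,L_X)$ with $X$ a linear order, $\iota_X:X\to\vartheta_T(X)$ and $L_X:X\to\omega$ functions, such that $L_{\vartheta_T(X)}\circ\iota_X=L_X$, where $L_{\vartheta_T(X)}(\vartheta\sigma):=\max\{L_X(x)\mid x\in\operatorname{supp}^T_X(\sigma)\}+1$ (maximum of the empty set is $0$). For such a system the relation $\vartheta\sigma<_{\vartheta_T(X)}\vartheta\tau$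 is defined by recursion on $L_{\vartheta_T(X)}(\vartheta\sigma)+L_{\vartheta_T(X)}(\vartheta\tau)$ to hold iff either (a) $\sigma<_{T_X}\tau$ and $[\iota_X]^{<\omega}(\operatorname{supp}^T_X(\sigma))<^{\operatorname{fin}}_{\vartheta_T(X)}\vartheta\tau$, or (b) $\tau<_{T_X}\sigma$ and $\vartheta\sigma\leq^{\operatorname{fin}}_{\vartheta_T(X)}[\iota_X]^{<\omega}(\operatorname{supp}^T_X(\tau))$. (Here $\leq_{\vartheta_T(X)}$ means $<_{\vartheta_T(X)}$ or equality of terms; the recursion is well-defined since $L_{\vartheta_T(X)}(\iota_X(x))<L_{\vartheta_T(X)}(\vartheta\sigma)$ for $x\in\operatorname{supp}^T_X(\sigma)$.) *)

(* Defs.v *)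
From Stdlib Require Import List ProofIrrelevance.
Set Implicit Arguments.

Record LinOrd : Type := {
  carrier :> Type;
  lt : carrier -> carrier -> Prop;
  lt_irrefl : forall x, ~ lt x x;
  lt_trans : forall x y z, lt x y -> lt y z -> lt x z;
  lt_total : forall x y, lt x y \/ x = y \/ lt y x
}.
Arguments lt {l} _ _.

Record Emb (X Y : LinOrd) : Type := {
  emb :> X -> Y;
  emb_mono : forall a b, lt a b -> lt (emb a) (emb b)
}.

Definition id_emb (X : LinOrd) : Emb X X :=
  {| emb := fun x => x; emb_mono := fun a b h => h |}.

Definition comp_emb (X Y Z : LinOrd) (f : Emb X Y) (g : Emb Y Z) : Emb X Z :=
  {| emb := fun x => g (f x);
     emb_mono := fun a b h => emb_mono g _ _ (emb_mono f _ _ h) |}.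

Definition finite_pred (A : Type) (P : A -> Prop) : Prop :=
  exists l : list A, forall x, P x <-> In x l.

Section Sub.
Variable (X : LinOrd) (P : X -> Prop).
Definition sub_lt (a b : {x : X | P x}) : Prop := lt (proj1_sig a) (proj1_sig b).
Lemma sub_irrefl : forall a, ~ sub_lt a a.
Proof. intros a; apply lt_irrefl. Qed.
Lemma sub_trans : forall a b c, sub_lt a b -> sub_lt b c -> sub_lt a c.
Proof. intros a b c; apply lt_trans. Qed.
Lemma sub_total : forall a b, sub_lt a b \/ a = b \/ sub_lt b a.
Proof.
  intros [a pa] [b pb]; unfold sub_lt; simpl.
  destruct (lt_total X a b) as [h|[h|h]]; auto.
  right; left; subst b; f_equal; apply proof_irrelevance.
Qed.
Definition sub_lo : LinOrd :=
  {| carrier := {x : X | P x}; lt := sub_lt;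
     lt_irrefl := sub_irrefl; lt_trans := sub_trans; lt_total := sub_total |}.
Definition incl_emb : Emb sub_lo X :=
  {| emb := fun a : sub_lo => proj1_sig a; emb_mono := fun a b h => h |}.
End Sub.

Record PraeDilator : Type := {
  T :> LinOrd -> LinOrd;
  Tmap : forall X Y : LinOrd, Emb X Y -> Emb (T X) (T Y);
  Tmap_id : forall (X : LinOrd) (s : T X), Tmap (id_emb X) s = s;
  Tmap_comp : forall (X Y Z : LinOrd) (f : Emb X Y) (g : Emb Y Z) (s : T X),
      Tmap (comp_emb f g) s = Tmap g (Tmap f s);
  supp : forall X : LinOrd, T X -> X -> Prop;
  supp_finite : forall (X : LinOrd) (s : T X), finite_pred (supp X s);
  supp_natural : forall (X Y : LinOrd) (f : Emb X Y) (s : T X) (y : Y),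
      supp Y (Tmap f s) y <-> exists x, supp X s x /\ f x = y;
  supp_condition : forall (X : LinOrd) (s : T X),
      exists s0 : T (sub_lo X (supp X s)), Tmap (incl_emb X (supp X s)) s0 = s
}.

Inductive theta (D : PraeDilator) (X : LinOrd) : Type :=
| vartheta : D X -> theta D X.
Arguments vartheta {D X} _.

(** [is_max0 P f m]: m = max { f a | P a }, with max of the empty set = 0. *)
Definition is_max0 (A : Type) (P : A -> Prop) (f : A -> nat) (m : nat) : Prop :=
  (forall a, P a -> f a <= m) /\ (m = 0 \/ exists a, P a /\ f a = m).

Definition Ltheta_is (D : PraeDilator) (X : LinOrd) (L : X -> nat)
    (t : theta D X) (n : nat) : Prop :=
  match t with
  | vartheta s => exists m, is_max0 (supp D X s) L m /\ n = S m
  end.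

Arguments Ltheta_is : clear implicits.

Definition is_BH_system (D : PraeDilator) (X : LinOrd)
    (iota : X -> theta D X) (L : X -> nat) : Prop :=
  forall x : X, Ltheta_is D X L (iota x) (L x).

(** The relation <_{theta_T(X)}: the recursive clauses (a) and (b), taken as
    an inductive (least) relation; clause (b) is split according to the two
    cases of <= (equality of terms, or <). *)
Inductive theta_lt (D : PraeDilator) (X : LinOrd) (iota : X -> theta D X)
  : theta D X -> theta D X -> Prop :=
| theta_lt_a : forall s t : D X,
    lt s t ->
    (forall x, supp D X s x -> theta_lt iota (iota x) (vartheta t)) ->
    theta_lt iota (vartheta s) (vartheta t)
| theta_lt_b_eq : forall (s t : D X) (y : X),
    lt t s -> supp D X t y -> vartheta s = iota y ->
    theta_lt iota (vartheta s) (vartheta t)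
| theta_lt_b_lt : forall (s t : D X) (y : X),
    lt t s -> supp D X t y -> theta_lt iota (vartheta s) (iota y) ->
    theta_lt iota (vartheta s) (vartheta t).

Arguments theta_lt : clear implicits.
Arguments is_BH_system : clear implicits.

Definition strict_linear_order (A : Type) (R : A -> A -> Prop) : Prop :=
  (forall a, ~ R a a) /\
  (forall a b c, R a b -> R b c -> R a c) /\
  (forall a b, R a b \/ a = b \/ R b a).

(* Main.v *)
Require Import Defs.
From Stdlib Require Import List Lia Classical Arith.

Section Proof.
Variables (D : PraeDilator) (X : LinOrd) (iota : X -> theta D X) (L : X -> nat).
Hypothesis HBH : is_BH_system D X iota L.

Let R := theta_lt D X iota.
Let mu := Ltheta_is D X L.

Lemma max_list (l : list X) : exists m, (forall a, In a l -> L a <= m) /\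
   (m = 0 \/ exists a, In a l /\ L a = m).
Proof.
  induction l as [|x l [m [H1 H2]]].
  - exists 0; split; [intros a []|auto].
  - destruct (Nat.le_ge_cases (L x) m).
    + exists m; split.
      * intros a [<-|Ha]; auto.
      * destruct H2 as [H2|[a [Ha Ha']]]; auto. right; exists a; simpl; auto.
    + exists (L x); split.
      * intros a [<-|Ha]; auto. specialize (H1 a Ha); lia.
      * right; exists x; simpl; auto.
Qed.

Lemma mu_ex (a : theta D X) : exists n, mu a n.
Proof.
  destruct a as [s]. destruct (supp_finite D X s) as [l Hl].
  destruct (max_list l) as [m [H1 H2]].
  exists (S m); exists m; split; [|reflexivity]. split.
  - intros a Ha; apply H1, Hl, Ha.
  - destruct H2 as [H2|[a [Ha Ha']]]; auto. right; exists a; split; auto; apply Hl; auto.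
Qed.

Lemma mu_supp s n x : mu (vartheta s) n -> supp D X s x -> L x < n.
Proof.
  intros [m [[H1 _] ->]] Hx. specialize (H1 x Hx). lia.
Qed.

Lemma mu_pos a n : mu a n -> 0 < n.
Proof. destruct a; intros [m [_ ->]]; lia. Qed.

Lemma irr a : ~ R a a.
Proof.
  intros H. unfold R in H. inversion H; subst; eapply lt_irrefl; eauto.
Qed.

Lemma asym (r s : D X) : lt r s -> lt s r -> False.
Proof. intros H1 H2. exact (lt_irrefl _ r (lt_trans _ _ _ _ H1 H2)). Qed.

Lemma inv r s : R (vartheta r) (vartheta s) ->
  (lt r s /\ forall x, supp D X r x -> R (iota x) (vartheta s)) \/
  (lt s r /\ exists y, supp D X s y /\ (vartheta r = iota y \/ R (vartheta r) (iota y))).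
Proof.
  intros H; unfold R in H; inversion H; subst.
  - left; split; auto.
  - right; split; auto. exists y; split; auto.
  - right; split; auto. exists y; split; auto.
Qed.

Lemma tri_aux n r t na nb : (forall a b na nb, mu a na -> mu b nb -> na + nb <= n ->
     R a b \/ a = b \/ R b a) ->
  mu (vartheta r) na -> mu (vartheta t) nb -> na + nb <= S n -> lt r t ->
  R (vartheta r) (vartheta t) \/ R (vartheta t) (vartheta r).
Proof.
  intros IH Ha Hb Hs Hrt.
  destruct (classic (forall x, supp D X r x -> R (iota x) (vartheta t))) as [H|H].
  - left; apply theta_lt_a; auto.
  - apply not_all_ex_not in H. destruct H as [x Hx].
    apply imply_to_and in Hx. destruct Hx as [Hx Hn].
    pose proof (mu_supp _ _ _ Ha Hx).
    destruct (IH (iota x) (vartheta t) (L x) nb (HBH x) Hb ltac:(lia)) as [h|[h|h]].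
    + contradiction.
    + right; eapply theta_lt_b_eq; eauto.
    + right; eapply theta_lt_b_lt; eauto.
Qed.

Lemma tri n : forall a b na nb, mu a na -> mu b nb -> na + nb <= n ->
     R a b \/ a = b \/ R b a.
Proof.
  induction n as [|n IH]; intros a b na nb Ha Hb Hs.
  - pose proof (mu_pos _ _ Ha); lia.
  - destruct a as [r], b as [t].
    destruct (lt_total _ r t) as [h|[h|h]].
    + destruct (tri_aux n r t na nb IH Ha Hb Hs h); auto.
    + subst; auto.
    + destruct (tri_aux n t r nb na IH Hb Ha ltac:(lia) h); auto.
Qed.

Lemma trans n : forall a b c na nb nc, mu a na -> mu b nb -> mu c nc ->
  na + nb + nc <= n -> R a b -> R b c -> R a c.
Proof.
  induction n as [|n IH]; intros a b c na nb nc Ha Hb Hc Hs Hab Hbc.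
  - pose proof (mu_pos _ _ Ha); lia.
  - destruct a as [r], b as [s], c as [t].
    destruct (lt_total _ r t) as [h|[h|h]].
    +
      destruct (inv _ _ Hab) as [[h1 h2]|[h1 [y [hy h2]]]].
      * apply theta_lt_a; auto. intros x Hx.
        pose proof (mu_supp _ _ _ Ha Hx).
        eapply (IH _ _ _ (L x) nb nc (HBH x) Hb Hc); eauto. lia.
      * destruct (inv _ _ Hbc) as [[h3 h4]|[h3 _]].
        -- specialize (h4 y hy). pose proof (mu_supp _ _ _ Hb hy).
           destruct h2 as [e|h2]; [rewrite e; auto|].
           eapply (IH _ _ _ na (L y) nc Ha (HBH y) Hc); eauto. lia.
        -- exfalso; eapply asym; [exact h3|]. eapply lt_trans; eauto.
    +
      subst t. exfalso.
      destruct (inv _ _ Hab) as [[h1 h2]|[h1 [y [hy h2]]]];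
      destruct (inv _ _ Hbc) as [[h3 h4]|[h3 [z [hz h5]]]].
      * eapply asym; eauto.
      * specialize (h2 z hz). pose proof (mu_supp _ _ _ Ha hz). pose proof (mu_supp _ _ _ Hc hz).
        destruct h5 as [e|h5]. { rewrite e in h2; eapply irr; eauto. }
        apply (irr (iota z)).
        eapply (IH _ _ _ (L z) nb (L z) (HBH z) Hb (HBH z)); eauto. lia.
      * specialize (h4 y hy). pose proof (mu_supp _ _ _ Hb hy).
        destruct h2 as [e|h2]. { rewrite e in h4; eapply irr; eauto. }
        apply (irr (vartheta r)).
        eapply (IH _ _ _ na (L y) nc Ha (HBH y) Hc); eauto. lia.
      * eapply asym; eauto.
    +
      destruct (inv _ _ Hbc) as [[h3 h4]|[h3 [z [hz h5]]]].
      * destruct (inv _ _ Hab) as [[h1 _]|[h1 [y [hy h2]]]].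
        -- exfalso; eapply asym; [exact h|]. eapply lt_trans; eauto.
        -- specialize (h4 y hy). pose proof (mu_supp _ _ _ Hb hy).
           destruct h2 as [e|h2]; [rewrite e; auto|].
           eapply (IH _ _ _ na (L y) nc Ha (HBH y) Hc); eauto. lia.
      * pose proof (mu_supp _ _ _ Hc hz).
        destruct h5 as [e|h5].
        -- eapply theta_lt_b_lt; eauto. rewrite <- e; auto.
        -- eapply theta_lt_b_lt; eauto.
           eapply (IH _ _ _ na nb (L z) Ha Hb (HBH z)); eauto. lia.
Qed.

End Proof.

Theorem lemma3p4 (D : PraeDilator) (X : LinOrd) (iota : X -> theta D X)
    (L : X -> nat) (HBH : is_BH_system D X iota L) :
  strict_linear_order (theta_lt D X iota).
Proof.
  split; [|split].
  - intros a; exact (irr D X iota a).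
  - intros a b c H1 H2.
    destruct (mu_ex D X L a) as [na Ha], (mu_ex D X L b) as [nb Hb], (mu_ex D X L c) as [nc Hc].
    exact (trans D X iota L HBH (na+nb+nc) a b c na nb nc Ha Hb Hc (le_n _) H1 H2).
  - intros a b.
    destruct (mu_ex D X L a) as [na Ha], (mu_ex D X L b) as [nb Hb].
    exact (tri D X iota L HBH (na+nb) a b na nb Ha Hb (le_n _)).
Qed.
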